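(* Assume $k\ge 2$, $\epsilon\in(0,1)$, $\delta\in(0,1)$, and $B\ge 108\,\frac{k}{\epsilon^3}\log k$. Let $\gamma=\frac{\epsilon^2}{36\log k}$. Run the pre-processing algorithm with per-color budget $B'=1/\gamma$ (assumed to be an integer), obtaining $T$; let $\tilde C=\{c\in C: f_c(T)<\mathrm{OPT}\}$ and $\tilde f_c(A)=f_c(A\cup T)$ for $c\in\tilde C$; then run Algorithm 2 with failure parameter $\delta$ on the functions $(\tilde f_c)_{c\in\tilde C}$ with budget $\tilde B=B-|T|$, obtaining $\tilde S$ (take $\tilde S=\emptyset$ if $\tilde C=\emptyset$). Then with probability at least $1-\delta$, \[ \min_{c\in C} f_c(T\cup\tilde S)\;\ge\;\left(1-\frac1e-\epsilon\right)\mathrm{OPT}, \] and $|T\cup\tilde S|\le B$.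
   Context: Setup: $V$ is a finite nonempty ground set, $C$ is a finite nonempty set of ''colors'', $k=|C|$. For each $c\in C$, $f_c\colon 2^V\to\mathbb{R}_{\ge 0}$ is monotone and submodular. $B$ is a positive integer (the budget). $f(T\mid S)=f(S\cup T)-f(S)$ and $f(v\mid S)=f(\{v\}\mid S)$. $\mathrm{OPT}=\max_{S\subseteq V,\,|S|\le B}\min_{c\in C} f_c(S)$. $\Delta_V$ is the probability simplex over $V$; $\log$ is the natural logarithm. Pre-processing algorithm (input: the $f_c$ and a per-color budget $B'$): set $T=\emptyset$; for each color $c\in C$, repeat $B'$ times: pick $v\in\arg\max_{v\in V} f_c(v\mid T)$ and set $T=T\cup\{v\}$. Output $T$. For a family of monotone submodular functions $(g_c)_{c\in D}$ on $V$ and budget $b$, $\mathrm{LP}(S)$ is: maximize $\xi$ subject to $\sum_{v\in V} x_v\,(b\, g_c(v\mid S)+g_c(S))\ge \xi$ for all $c\in D$, $x\in\Delta_V$. Algorithm 2 (input: $(g_c)_{c\in D}$, $b$, $\delta$): set $S_{\mathrm{best}}=\emptyset$; repeat, with independent randomness, $\lceil\log_2(2/\delta)\rceil$ times: $S^{(0)}=\emptyset$; for $i=1,\dots,b$: let $x^{(i)}$ be an optimal solution of $\mathrm{LP}(S^{(i-1)})$, sample $v^{(i)}\sim x^{(i)}$, $S^{(i)}=S^{(i-1)}\cup\{v^{(i)}\}$; if $\min_c g_c(S^{(b)})\ge\min_c g_c(S_{\mathrm{best}})$ set $S_{\mathrm{best}}=S^{(b)}$. Output $S_{\mathrm{best}}$.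 *)

(* Defs.v *)
From HB Require Import structures.
From mathcomp Require Import all_boot all_order all_algebra.
From mathcomp Require Import all_classical all_reals sequences exp.
Set Implicit Arguments. Unset Strict Implicit. Unset Printing Implicit Defensive.
Import Order.TTheory GRing.Theory Num.Theory.
Local Open Scope ring_scope.

Section Defs.
Variables (R : realType) (V C : finType).

Definition nonneg_fun (g : {set V} -> R) := forall A, 0 <= g A.
Definition monotone_fun (g : {set V} -> R) := forall A B : {set V}, A \subset B -> g A <= g B.
Definition submodular_fun (g : {set V} -> R) :=
  forall A B, g (A :|: B) + g (A :&: B) <= g A + g B.

Definition marg (g : {set V} -> R) (v : V) (S : {set V}) : R := g (v |: S) - g S.

(* minimum over a finite set of colours (0 if the set is empty) *)
Definition minover (D : {set C}) (h : C -> R) : R :=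
  if [pick c in D] is Some c0 then \big[Num.min/h c0]_(c in D) h c else 0.

(* OPT = max_{|S| <= B} min_c f_c(S)   (f nonnegative, S = finset.set0 is feasible) *)
Definition OPT (f : C -> {set V} -> R) (B : nat) : R :=
  \big[Num.max/0]_(S : {set V} | (#|S| <= B)%N) minover [set: C] (fun c => f c S).

(* Pre-processing algorithm, as a relation "T is a possible output".
   greedy_steps f c n T T' : n greedy steps for colour c, starting at T, end at T'. *)
Fixpoint greedy_steps (f : C -> {set V} -> R) (c : C) (n : nat) (T T' : {set V}) : Prop :=
  match n with
  | 0 => T' = T
  | n'.+1 => exists v, (forall w, marg (f c) w T <= marg (f c) v T) /\
                       greedy_steps f c n' (v |: T) T'
  end.

Fixpoint greedy_colors (f : C -> {set V} -> R) (B' : nat) (cs : seq C) (T T' : {set V}) : Prop :=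
  match cs with
  | [::] => T' = T
  | c :: cs' => exists T1, greedy_steps f c B' T T1 /\ greedy_colors f B' cs' T1 T'
  end.

Definition preprocess_output (f : C -> {set V} -> R) (B' : nat) (T : {set V}) : Prop :=
  exists cs : seq C, perm_eq cs (enum C) /\ greedy_colors f B' cs finset.set0 T.

Definition in_simplex (x : V -> R) := (forall v, 0 <= x v) /\ \sum_v x v = 1.

Definition LP_obj (g : C -> {set V} -> R) (D : {set C}) (b : nat) (S : {set V})
  (x : V -> R) : R :=
  minover D (fun c => \sum_v x v * (b%:R * marg (g c) v S + g c S)).

Definition LP_optimal (g : C -> {set V} -> R) (D : {set C}) (b : nat) (S : {set V})
  (x : V -> R) : Prop :=
  in_simplex x /\ forall y, in_simplex y -> LP_obj g D b S y <= LP_obj g D b S x.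

(* Expectation of h(S^(n)) for one run of the inner loop of Algorithm 2, started
   at S, where sel S is the (optimal LP) distribution used at current set S. *)
Fixpoint trial_exp (sel : {set V} -> V -> R) (n : nat) (S : {set V})
  (h : {set V} -> R) : R :=
  match n with
  | 0 => h S
  | n'.+1 => \sum_v sel S v * trial_exp sel n' (v |: S) h
  end.

(* Expectation of h(S_best) for r independent repetitions of the inner loop,
   starting with current best Sbest. *)
Fixpoint alg2_exp (g : C -> {set V} -> R) (D : {set C}) (b : nat)
  (sel : {set V} -> V -> R) (r : nat) (Sbest : {set V}) (h : {set V} -> R) : R :=
  match r with
  | 0 => h Sbest
  | r'.+1 => trial_exp sel b finset.set0 (fun S =>
      alg2_exp g D b sel r'
        (if minover D (fun c => g c Sbest) <= minover D (fun c => g c S) then S else Sbest) h)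
  end.

Definition alg2_reps (delta : R) : nat := `|Num.ceil (ln (2 / delta) / ln 2)|%N.

Definition alg2_prob (g : C -> {set V} -> R) (D : {set C}) (b : nat)
  (sel : {set V} -> V -> R) (delta : R) (P : {set V} -> bool) : R :=
  alg2_exp g D b sel (alg2_reps delta) finset.set0 (fun S => if P S then 1 else 0).

End Defs.

(* Main.v *)
Require Import Defs.
From HB Require Import structures.
From mathcomp Require Import all_boot all_order all_algebra.
From mathcomp Require Import all_classical all_reals sequences exp.
From mathcomp Require Import ring lra zify.
From Stdlib Require Import Lia.
From mathcomp Require Import finset.
Import Order.TTheory GRing.Theory Num.Theory.
Local Open Scope ring_scope.
Set Implicit Arguments. Unset Strict Implicit. Unset Printing Implicit Defensive.
Section SetFun.
Variables (R : realType) (V : finType) (g : {set V} -> R).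
Hypothesis (gmono : monotone_fun g) (gsub : submodular_fun g).

Lemma marg_ge0 v S : 0 <= marg g v S.
Proof. rewrite /marg subr_ge0; exact: (gmono (subsetUr [set v] S)). Qed.

Lemma dimret w (A B : {set V}) : A \subset B -> marg g w B <= marg g w A.
Proof.
move=> AB; rewrite /marg.
have [wB|wB] := boolP (w \in B).
  have -> : w |: B = B by apply/setUidPr; rewrite sub1set.
  rewrite subrr; exact: marg_ge0.
have h := gsub (w |: A) B.
have e1 : (w |: A) :|: B = w |: B.
  by rewrite -setUA (setUidPr AB).
have e2 : (w |: A) :&: B = A.
  rewrite setIUl (setIidPl AB).
  have -> : [set w]%SET :&: B = finset.set0.
    apply/setP=> x; rewrite !inE; apply/andP=> -[/eqP -> ]; by rewrite (negbTE wB).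
  by rewrite set0U.
rewrite e1 e2 in h; lra.
Qed.

Lemma sum_marg (A S : {set V}) : g (A :|: S) - g S <= \sum_(v in A) marg g v S.
Proof.
elim: {A}_.+1 {-2}A (ltnSn #|A|) => // n IH A.
case: (set_0Vmem A) => [->|[a aA]].
  by rewrite set0U subrr big_set0.
move=> cA.
have cA' : (#|A :\ a| < n)%N.
  by move: cA; rewrite (cardsD1 a A) aA ltnS.
have := IH _ cA'.
rewrite (big_setD1 a aA) /=.
have eA : A :|: S = a |: ((A :\ a) :|: S).
  by rewrite setUA (setD1K aA).
have := @dimret a _ _ (subsetUr (A :\ a) S).
rewrite /marg eA; lra.
Qed.
End SetFun.

Section Minover.
Variables (R : realType) (C : finType).

Lemma minover_le (D : {set C}) (h : C -> R) c : c \in D -> minover D h <= h c.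
Proof.
move=> cD; rewrite /minover; case: pickP => [c0 _|]; last by move/(_ c); rewrite cD.
by rewrite (bigD1 c cD) /= ge_min lexx.
Qed.

Lemma minover_ge (D : {set C}) (h : C -> R) a : D != finset.set0 ->
  (forall c, c \in D -> a <= h c) -> a <= minover D h.
Proof.
move=> /set0Pn [c cD] H; rewrite /minover; case: pickP => [c0 c0D|]; last by move/(_ c); rewrite cD.
apply: (big_ind (fun x => a <= x)) => //; first exact: H.
by move=> x y ax ay; rewrite le_min ax ay.
Qed.
End Minover.
Section OPTlem.
Variables (R : realType) (V C : finType) (f : C -> {set V} -> R).

Lemma OPT_ge0 B : 0 <= OPT f B.
Proof.
rewrite /OPT; elim/big_rec: _ => // i x _ hx; by rewrite le_max hx orbT.
Qed.

Lemma OPT_att B : OPT f B = 0 \/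
  exists S : {set V}, (#|S| <= B)%N /\ OPT f B = minover [set: C] (fun c => f c S).
Proof.
rewrite /OPT; apply: (big_ind (fun x => x = 0 \/ exists S : {set V}, (#|S| <= B)%N /\
   x = minover [set: C] (fun c => f c S))).
- by left.
- by move=> x y hx hy; cbv beta; have [xy|yx] := leP x y.
- by move=> S hS; right; exists S.
Qed.
End OPTlem.
Section Greedy.
Variables (R : realType) (V C : finType) (f : C -> {set V} -> R).
Hypotheses (fnn : forall c, nonneg_fun (f c)) (fmono : forall c, monotone_fun (f c))
  (fsub : forall c, submodular_fun (f c)).

Lemma gsteps_sub c n T0 T1 : greedy_steps f c n T0 T1 -> T0 \subset T1 /\ (#|T1| <= #|T0| + n)%N.
Proof.
elim: n T0 => [|n IH] T0 /=; first by move=> ->; rewrite addn0.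
move=> [v [_ hs]]; have [h1 h2] := IH _ hs; split.
  exact: fintype.subset_trans (subsetUr [set v] T0) h1.
by move: h2; rewrite cardsU1; case: (v \in T0) => /=; lia.
Qed.

Lemma gsteps_gain c n T0 T1 : (0 < n)%N -> greedy_steps f c n T0 T1 ->
  exists U : {set V}, T0 \subset U /\ U \subset T1 /\
   forall w, n%:R * marg (f c) w U <= f c T1 - f c T0.
Proof.
elim: n T0 => [|n IH] T0 // _ /= [v [hv hs]].
case: n IH hs => [|n] IH hs.
  move: hs => /= ->; exists T0; split => //; split; first exact: subsetUr.
  by move=> w; rewrite mul1r; exact: hv.
have [U [h1 [h2 h3]]] := IH (v |: T0) isT hs.
have T0U : T0 \subset U := fintype.subset_trans (subsetUr [set v] T0) h1.
exists U; split => //; split => // w.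
have := h3 w; have := @dimret _ _ _ (fmono c) (fsub c) w _ _ T0U; have := hv w.
rewrite -(addn1 n.+1) natrD mulrDl mul1r /marg; lra.
Qed.

Lemma gcolors B' cs T0 T' : greedy_colors f B' cs T0 T' ->
  [/\ T0 \subset T', (#|T'| <= #|T0| + size cs * B')%N &
   (0 < B')%N -> forall c, c \in cs -> exists U : {set V}, U \subset T' /\
      forall w, B'%:R * marg (f c) w U <= f c T'].
Proof.
elim: cs T0 => [|c cs IH] T0 /=; first by move=> ->; split => //; rewrite addn0.
move=> [T1 [hs hc]]; have [s1 s2] := gsteps_sub hs; have [i1 i2 i3] := IH _ hc.
split.
- exact: fintype.subset_trans s1 i1.
- by lia.
move=> B0 c'; rewrite in_cons => /orP [/eqP ->|c'cs]; last exact: i3.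
have [U [u1 [u2 u3]]] := gsteps_gain B0 hs.
exists U; split; first exact: fintype.subset_trans u2 i1.
move=> w; have := u3 w; have := fnn c T0; have := fmono c i1; lra.
Qed.

Lemma preproc B' T : preprocess_output f B' T -> (0 < B')%N ->
  (#|T| <= #|C| * B')%N /\
  forall c (S : {set V}) w, T \subset S -> B'%:R * marg (f c) w S <= f c T.
Proof.
move=> [cs [pc hc]] B0; have [_ h2 h3] := gcolors hc.
have scs : size cs = #|C| by rewrite (perm_size pc) cardE.
split; first by move: h2; rewrite cards0 scs.
move=> c S w TS.
have cin : c \in cs by rewrite (perm_mem pc) mem_enum.
have [U [UT hU]] := h3 B0 c cin.
have := hU w; have := @dimret _ _ _ (fmono c) (fsub c) w _ _ (fintype.subset_trans UT TS).
have : (0:R) <= B'%:R by [].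
nra.
Qed.
End Greedy.
Section Trial.
Variables (R : realType) (V : finType) (sel : {set V} -> V -> R).
Hypothesis simp : forall S, in_simplex (sel S).

Lemma sel_ge0 S v : 0 <= sel S v. Proof. by case: (simp S). Qed.
Lemma sel_sum1 S : \sum_v sel S v = 1. Proof. by case: (simp S). Qed.

Lemma trial_aff n S a b h :
  trial_exp sel n S (fun X => a + b * h X) = a + b * trial_exp sel n S h.
Proof.
elim: n S => [|n IH] S //=.
under eq_bigr do rewrite IH mulrDr.
by rewrite big_split /= -mulr_suml sel_sum1 mul1r mulr_sumr; congr (_ + _);
  apply: eq_bigr => v _; rewrite mulrCA.
Qed.

Lemma trial_const n S a : trial_exp sel n S (fun _ => a) = a.
Proof.
elim: n S => [|n IH] S //=.
under eq_bigr do rewrite IH.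
by rewrite -mulr_suml sel_sum1 mul1r.
Qed.

Lemma trial_sum (I : finType) (D : {set I}) n S (h : I -> {set V} -> R) :
  trial_exp sel n S (fun X => \sum_(c in D) h c X) = \sum_(c in D) trial_exp sel n S (h c).
Proof.
elim: n S => [|n IH] S //=.
under eq_bigr do rewrite IH mulr_sumr.
by rewrite exchange_big.
Qed.

Lemma trial_mono n (S : {set V}) (h1 h2 : {set V} -> R) : (forall X : {set V}, (#|X| <= #|S| + n)%N -> h1 X <= h2 X) ->
  trial_exp sel n S h1 <= trial_exp sel n S h2.
Proof.
elim: n S => [|n IH] S /= H; first by apply: H; rewrite addn0.
apply: ler_sum => v _; apply: ler_wpM2l; first exact: sel_ge0.
apply: IH => X hX; apply: H; move: hX; rewrite cardsU1; case: (v \in S) => /=; lia.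
Qed.
Lemma trial_scale n S a h :
  trial_exp sel n S (fun X => a * h X) = a * trial_exp sel n S h.
Proof.
elim: n S => [|n IH] S //=.
under eq_bigr do rewrite IH mulrCA.
by rewrite -mulr_sumr.
Qed.
End Trial.
Lemma expNy_le (R : realType) (y : R) : 0 <= y -> expR (- y) <= 1 - y + y ^+ 2.
Proof.
move=> y0.
have h2 : 1 + y / 2 <= expR (y / 2) := expR_ge1Dx _.
have e2 : expR y = expR (y / 2) * expR (y / 2) by rewrite -expRD; congr expR; lra.
have q : (1 + y / 2) * (1 + y / 2) <= expR y.
  rewrite e2; apply: ler_pM => //; lra.
have E : expR (- y) * expR y = 1 by rewrite expRN mulVf // gt_eqF // expR_gt0.
have ep := expR_gt0 y.
rewrite -(ler_pM2r ep) E.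
have : 0 <= 1 - y + y ^+ 2 by rewrite expr2; nra.
rewrite expr2 => hq.
have : (1 - y + y * y) * ((1 + y / 2) * (1 + y / 2)) <= (1 - y + y * y) * expR y.
  exact: ler_wpM2l.
have : 1 <= (1 - y + y * y) * ((1 + y / 2) * (1 + y / 2)).
  have -> : (1 - y + y * y) * ((1 + y / 2) * (1 + y / 2)) =
     1 + y * y / 4 + 3 * (y * y * y) / 4 + y * y * y * y / 4 by field.
  have : 0 <= y * y * y by apply: mulr_ge0 => //; apply: mulr_ge0.
  have : 0 <= y * y * y * y by apply: mulr_ge0 => //; apply: mulr_ge0 => //; apply: mulr_ge0.
  have : 0 <= y * y by apply: mulr_ge0.
  lra.
lra.
Qed.

Lemma mul_le1 (R : realType) (x y : R) : 0 <= x -> y <= 1 -> x * y <= x.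
Proof. move=> x0 y1; have : 0 <= x * (1 - y) by apply: mulr_ge0; lra. lra. Qed.
Section Conc2.
Variables (R : realType) (V : finType) (sel : {set V} -> V -> R) (g : {set V} -> R).
Variables (b : nat) (P M : R).
Hypothesis simp : forall S, in_simplex (sel S).
Hypothesis b1 : (1 <= b)%N.
Hypothesis M0 : 0 <= M.
Hypothesis Hinc : forall S v, 0 <= g (v |: S) - g S <= M.
Hypothesis Hdrift : forall S, P - g S <= b%:R * \sum_v sel S v * (g (v |: S) - g S).

Lemma step_ineq (lam : R) S : 0 <= lam -> lam * M <= 1 ->
  \sum_v sel S v * expR (lam * (P - g (v |: S))) <=
  expR (lam * (1 - (1 - lam * M) / b%:R) * (P - g S)).
Proof.
move=> l0 lM.
have hb : (1 : R) <= b%:R by rewrite ler1n.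
set z := P - g S.
set kap := lam * (1 - lam * M).
have k0 : 0 <= kap by apply: mulr_ge0 => //; lra.
set e := expR (lam * z).
have e0 : 0 <= e by apply: ltW; exact: expR_gt0.
pose X v := g (v |: S) - g S.
have pt : forall v, expR (lam * (P - g (v |: S))) <= e * (1 - kap * X v).
  move=> v; have /andP [X0 XM] := Hinc S v.
  have -> : lam * (P - g (v |: S)) = lam * z + (- (lam * X v)) by rewrite /z /X; ring.
  rewrite expRD; apply: ler_wpM2l => //.
  have lX : 0 <= lam * X v by apply: mulr_ge0.
  apply: le_trans (expNy_le lX) _.
  have : 0 <= lam * lam * X v * (M - X v).
    by apply: mulr_ge0; [apply: mulr_ge0; [apply: mulr_ge0|]|]; rewrite // subr_ge0.
  rewrite /kap expr2 /X; nra.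
set E := \sum_v sel S v * X v.
have hE : z <= b%:R * E := Hdrift S.
have sum1 : \sum_v sel S v * expR (lam * (P - g (v |: S))) <= e * (1 - kap * E).
  apply: (@le_trans _ _ (\sum_v sel S v * (e * (1 - kap * X v)))).
    apply: ler_sum => v _; apply: ler_wpM2l; [exact: sel_ge0 | exact: pt].
  have -> : \sum_v sel S v * (e * (1 - kap * X v)) =
    \sum_v (e * sel S v - e * kap * (sel S v * X v)).
    by apply: eq_bigr => v _; ring.
  rewrite sumrB -!mulr_sumr (sel_sum1 simp) /E le_eqVlt; apply/orP; left; apply/eqP; rewrite /kap; ring.
apply: le_trans sum1 _.
have E0 : 0 <= E by apply: sumr_ge0 => v _; apply: mulr_ge0; [exact: sel_ge0|]; have /andP[] := Hinc S v.
have -> : lam * (1 - (1 - lam * M) / b%:R) * z = lam * z + (- (kap * z / b%:R)).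
  by rewrite /kap; field; lra.
rewrite expRD -/e; apply: ler_wpM2l => //.
have bpos : 0 < (b%:R : R) by lra.
have [z0|z0] := leP 0 z.
  apply: le_trans (expR_ge1Dx _).
  have h1 : z / b%:R <= E by rewrite ler_pdivrMr // mulrC.
  have h2 : kap * (z / b%:R) <= kap * E by apply: ler_wpM2l.
  move: h2; rewrite mulrA; lra.
apply: (@le_trans _ _ (1)).
  have : 0 <= kap * E by apply: mulr_ge0.
  lra.
apply: le_trans (expR_ge1Dx _).
have : kap * z / b%:R <= 0.
  rewrite -mulrA; apply: mulr_ge0_le0 => //.
  by rewrite ler_pdivrMr // mul0r; apply: ltW.
lra.
Qed.

Fixpoint Lf (mu : R) (n : nat) : R :=
  match n with 0 => mu | n'.+1 => Lf mu n' * (1 - (1 - Lf mu n' * M) / b%:R) end.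

Lemma Lf_bounds mu n : 0 <= mu -> mu * M <= 1 ->
  (0 <= Lf mu n <= mu) /\ Lf mu n <= mu * (1 - (1 - mu * M) / b%:R) ^+ n.
Proof.
move=> m0 mM.
have hb : (1 : R) <= b%:R by rewrite ler1n.
set bi := (b%:R : R)^-1.
have bi0 : 0 < bi by rewrite invr_gt0; lra.
have hbb : bi * b%:R = 1 by rewrite mulVf // gt_eqF //; lra.
have bi1 : bi <= 1 by nra.
have q0 : 0 <= 1 - (1 - mu * M) / b%:R.
  have : 0 <= mu * M by apply: mulr_ge0.
  rewrite -/bi => h; nra.
elim: n => [|n [/andP [l0 lm] lq]] /=.
  by rewrite expr0 mulr1 lexx m0.
rewrite -/bi.
set l := Lf mu n in l0 lm lq *.
have lM0 : 0 <= l * M by apply: mulr_ge0.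
have lMm : l * M <= mu * M by apply: ler_wpM2r.
have w0 : 0 <= (1 - l * M) * bi by apply: mulr_ge0; lra.
have w1 : (1 - l * M) * bi <= 1 - l * M by apply: mul_le1; lra.
have ww : (1 - mu * M) * bi <= (1 - l * M) * bi by apply: ler_wpM2r; lra.
have e1 : 0 <= l * (1 - (1 - l * M) * bi).
  by apply: mulr_ge0; lra.
have e2 : l * (1 - (1 - l * M) * bi) <= l by apply: mul_le1; lra.
have e3 : l * (1 - (1 - l * M) * bi) <= l * (1 - (1 - mu * M) * bi).
  by apply: ler_wpM2l => //; lra.
have e4 : l * (1 - (1 - mu * M) * bi) <= mu * (1 - (1 - mu * M) * bi) ^+ n * (1 - (1 - mu * M) * bi).
  by apply: ler_wpM2r.
split; first by rewrite e1 /=; lra.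
by rewrite exprSr mulrA; lra.
Qed.

Lemma trial_bound mu n S : 0 <= mu -> mu * M <= 1 ->
  trial_exp sel n S (fun X => expR (mu * (P - g X))) <= expR (Lf mu n * (P - g S)).
Proof.
move=> m0 mM; elim: n S => [|n IH] S /=; first exact: lexx.
have [/andP [l0 lm] _] := Lf_bounds n m0 mM.
have lM : Lf mu n * M <= 1 by apply: le_trans mM; apply: ler_wpM2r.
apply: le_trans (step_ineq S l0 lM).
apply: ler_sum => v _; apply: ler_wpM2l; [exact: sel_ge0 | exact: IH].
Qed.
End Conc2.
Section Rep.
Variables (R : realType) (V C : finType) (g : C -> {set V} -> R) (D : {set C}) (b : nat).
Variables (sel : {set V} -> V -> R) (thr : R) (Good : {set V} -> bool).
Hypothesis simp : forall S, in_simplex (sel S).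
Let m S := minover D (fun c => g c S).
Hypothesis HG : forall S : {set V}, (#|S| <= b)%N -> Good S = (thr <= m S).
Hypothesis HT : trial_exp sel b finset.set0 (fun S => if thr <= m S then 0 else 1) <= 1 / 2.

Lemma rep r (Sb : {set V}) : (#|Sb| <= b)%N ->
  (Good Sb -> 1 <= alg2_exp g D b sel r Sb (fun S => if Good S then 1 else 0)) /\
  1 - (1 / 2) ^+ r <= alg2_exp g D b sel r Sb (fun S => if Good S then 1 else 0).
Proof.
elim: r Sb => [|r IH] Sb hSb /=.
  by split; [move=> -> | rewrite expr0 subrr; case: (Good Sb)].
set h := fun S : {set V} => if Good S then 1 else 0.
have card_upd : forall S : {set V}, (#|S| <= b)%N ->
    (#|if (m Sb <= m S)%R then S else Sb| <= b)%N.
  by move=> S hS; case: ifP.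
have upd_a : forall S : {set V}, (#|S| <= b)%N -> Good Sb -> Good (if m Sb <= m S then S else Sb).
  move=> S hS; rewrite !HG //; case: ifP => // h1 h2; exact: le_trans h2 h1.
have upd_b : forall S : {set V}, (#|S| <= b)%N -> thr <= m S -> Good (if m Sb <= m S then S else Sb).
  move=> S hS h1; case: ifP => h2; first by rewrite HG.
  rewrite HG //; apply: le_trans h1 _; apply: ltW; by rewrite ltNge h2.
split.
  move=> GS; rewrite -{1}(trial_const simp b finset.set0 1).
  apply: (trial_mono simp) => S. rewrite cards0 add0n => hS.
  have [IH1 _] := IH _ (card_upd S hS); exact: IH1 (upd_a S hS GS).
apply: (@le_trans _ _ (trial_exp sel b finset.set0
   (fun S => 1 + (- (1/2) ^+ r) * (if thr <= m S then 0 else 1)))).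
  rewrite (trial_aff simp).
  have : 0 <= (1 / 2 : R) ^+ r by apply: exprn_ge0; lra.
  rewrite exprSr; move: HT; set t := trial_exp _ _ _ _; nra.
apply: (trial_mono simp) => S; rewrite cards0 add0n => hS.
have [IH1 IH2] := IH _ (card_upd S hS).
case: ifP => hm.
  by rewrite mulr0 addr0; apply: IH1; exact: upd_b.
by rewrite mulr1.
Qed.
End Rep.
Lemma pow_exp (R : realType) (a : R) n : (0 < n)%N -> 0 <= 1 - a / n%:R ->
  (1 - a / n%:R) ^+ n <= expR (- a).
Proof.
move=> n0 h.
have npos : 0 < (n%:R : R) by rewrite ltr0n.
have e : expR (- a) = expR (- (a / n%:R)) ^+ n.
  by rewrite -expRM_natl; congr expR; field; rewrite gt_eqF.
rewrite e; apply: lerXn2r => //.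
  by rewrite nnegrE; apply: ltW; apply: expR_gt0.
by have := expR_ge1Dx (- (a / n%:R)); lra.
Qed.

Lemma expR_le12 (R : realType) (e : R) : 0 <= e <= 1 / 2 -> expR e <= 1 + 2 * e.
Proof.
move=> /andP [e0 e1].
have h := expR_ge1Dx (- e).
have E : expR e * expR (- e) = 1 by rewrite expRxMexpNx_1.
have p := expR_gt0 e.
have : 0 <= expR e * (expR (- e) - (1 - e)) by apply: mulr_ge0; lra.
have : 0 <= expR e * (e * (1 - 2 * e)) by apply: mulr_ge0; [lra|apply: mulr_ge0; lra].
nra.
Qed.

Lemma reps_le (R : realType) (delta : R) : 0 < delta < 1 ->
  (1 / 2) ^+ (alg2_reps delta) <= delta.
Proof.
move=> /andP [d0 d1].
set r := alg2_reps delta.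
have l2 : 0 < ln (2 : R) by apply: ln_gt0; lra.
have g1 : 1 < 2 / delta by rewrite ltr_pdivlMr //; lra.
have lx : 0 < ln (2 / delta) by apply: ln_gt0.
set x := ln (2 / delta) / ln 2.
have x0 : 0 < x by apply: divr_gt0.
have rx : x <= r%:R.
  rewrite /r /alg2_reps -/x natr_absz ger0_norm; first exact: ceil_ge.
  by rewrite ceil_ge0; lra.
have p2 : (2 / delta) <= 2 ^+ r.
  have -> : (2 : R) ^+ r = expR (r%:R * ln 2) by rewrite expRM_natl lnK // posrE; lra.
  rewrite -{1}(@lnK _ (2 / delta)); last by rewrite posrE; lra.
  rewrite ler_expR.
  have -> : ln (2 / delta) = x * ln 2 by rewrite /x; field; rewrite gt_eqF.
  by apply: ler_wpM2r => //; apply: ltW.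
rewrite expr_div_n expr1n.
have t0 : 0 < (2 : R) ^+ r by apply: exprn_gt0.
rewrite ler_pdivrMr //.
have h : 2 <= delta * 2 ^+ r.
  by move: p2; rewrite ler_pdivrMr // mulrC.
apply: le_trans h; by rewrite ler1n.
Qed.

Lemma kbound (R : realType) (k : nat) : (2 <= k)%N ->
  k%:R * expR (- (6 * ln (k%:R : R))) <= 1 / 2.
Proof.
move=> k2.
have kr : (2 : R) <= k%:R by rewrite ler_nat.
have kp : (0 : R) < k%:R by lra.
have l2 : ln (2 : R) <= ln (k%:R : R) by rewrite ler_ln // posrE; lra.
have l0 : 0 < ln (2 : R) by apply: ln_gt0; lra.
have e1 : expR (- ln (k%:R : R)) = (k%:R)^-1 by rewrite expRN lnK // posrE.
have e2 : expR (- ln (2 : R)) = 2^-1 by rewrite expRN lnK // posrE; lra.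
have h : expR (- (6 * ln (k%:R : R))) <= expR (- ln (k%:R : R) + - ln 2).
  by rewrite ler_expR; lra.
rewrite expRD e1 e2 in h.
have h2 : k%:R * expR (- (6 * ln (k%:R : R))) <= k%:R * ((k%:R)^-1 * 2^-1).
  by apply: ler_wpM2l => //; apply: ltW.
by rewrite mulrA mulfV ?gt_eqF // mul1r div1r in h2.
Qed.
Lemma shift_mono (R : realType) (V : finType) (g : {set V} -> R) (T : {set V}) :
  monotone_fun g -> monotone_fun (fun A => g (A :|: T)).
Proof. by move=> gm A B AB; apply: gm; apply: setSU. Qed.

Lemma shift_sub (R : realType) (V : finType) (g : {set V} -> R) (T : {set V}) :
  submodular_fun g -> submodular_fun (fun A => g (A :|: T)).
Proof.
move=> gs A B /=; have := gs (A :|: T) (B :|: T).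
have -> : (A :|: T) :|: (B :|: T) = (A :|: B) :|: T.
  by apply/setP => x; rewrite !inE; case: (x \in A); case: (x \in B); case: (x \in T).
by rewrite -setUIl.
Qed.

Lemma shift_nn (R : realType) (V : finType) (g : {set V} -> R) (T : {set V}) :
  nonneg_fun g -> nonneg_fun (fun A => g (A :|: T)).
Proof. by move=> h A; apply: h. Qed.

Lemma card_aux (V : finType) (T S : {set V}) (B : nat) :
  (#|T| <= B)%N -> (#|S| <= B - #|T|)%N -> (#|T :|: S| <= B)%N.
Proof. move=> h1 h2; have := cardsUI T S; lia. Qed.

Lemma union_bound (R : realType) (V C : finType) (sel : {set V} -> V -> R)
  (Ct : {set C}) (g h : C -> {set V} -> R) (b : nat) (thr K eb : R) :
  (forall S, in_simplex (sel S)) -> Ct != finset.set0 -> 0 <= K ->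
  (forall c X, 0 <= h c X) -> (forall c X, g c X < thr -> 1 <= K * h c X) ->
  (forall c, c \in Ct -> K * trial_exp sel b finset.set0 (h c) <= eb) ->
  #|Ct|%:R * eb <= 1 / 2 ->
  trial_exp sel b finset.set0 (fun S => if thr <= minover Ct (fun c => g c S) then 0 else 1) <= 1 / 2.
Proof.
move=> simp Ct0 K0 h0 h1 h2 h3.
apply: le_trans h3.
apply: (@le_trans _ _ (trial_exp sel b finset.set0 (fun X => \sum_(c in Ct) K * h c X))).
  apply: (trial_mono simp) => X _.
  case: ifP => hm.
    by apply: sumr_ge0 => c _; apply: mulr_ge0.
  have : ~~ [forall c in Ct, thr <= g c X].
    apply/negP => /forall_inP H; move: hm; rewrite minover_ge //.
  move/forall_inPn => [c cCt]; rewrite -ltNge => hc.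
  rewrite (bigD1 c cCt) /=.
  have : 0 <= \sum_(i in Ct | i != c) K * h i X.
    by apply: sumr_ge0 => i _; apply: mulr_ge0.
  have := h1 c X hc; lra.
rewrite trial_sum.
apply: (@le_trans _ _ (\sum_(c in Ct) eb)).
  apply: ler_sum => c cCt; rewrite trial_scale; exact: h2.
by rewrite sumr_const mulr_natl.
Qed.

Lemma percolor (R : realType) (V : finType) (sel : {set V} -> V -> R) (g : {set V} -> R)
  (b : nat) (P M mu eps : R) :
  (forall S, in_simplex (sel S)) -> (0 < b)%N -> 0 <= M ->
  (forall S v, 0 <= g (v |: S) - g S <= M) ->
  (forall S, P - g S <= b%:R * \sum_v sel S v * (g (v |: S) - g S)) ->
  0 <= mu -> mu * M = eps / 3 -> 0 < eps < 1 ->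
  exists L, (0 <= L <= mu * ((1 / expR 1) * (1 + 2 * (eps / 3)))) /\
    trial_exp sel b finset.set0 (fun X => expR (mu * (P - g X))) <= expR (L * (P - g finset.set0)).
Proof.
move=> simp b0 M0 Hinc Hdrift mu0 muM /andP [e0 e1].
have mM1 : mu * M <= 1 by rewrite muM; lra.
exists (Lf b M mu b); split; last exact: trial_bound.
have [/andP [L0 Lm] Lq] := Lf_bounds b0 M0 b mu0 mM1.
rewrite L0 /=; apply: le_trans Lq _; apply: ler_wpM2l => //.
rewrite muM.
have hb : (1 : R) <= b%:R by rewrite ler1n.
have bpos : (0 : R) < b%:R by lra.
have q0 : 0 <= 1 - (1 - eps / 3) / b%:R.
  rewrite subr_ge0 ler_pdivrMr // mul1r; lra.
apply: le_trans (pow_exp b0 q0) _.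
have -> : - (1 - eps / 3) = -1 + eps / 3 by ring.
rewrite expRD div1r -expRN; apply: ler_wpM2l; first exact: ltW (expR_gt0 _).
apply: expR_le12; apply/andP; split; lra.
Qed.

Lemma core (R : realType) (eps A OPT mu L lk Bp g0 : R) :
  0 < eps < 1 -> 0 <= A <= 1 / 2 -> 0 <= OPT -> 0 <= mu ->
  mu * OPT = eps / 3 * Bp -> Bp = 36 * lk / eps ^+ 2 ->
  0 <= L <= mu * (A * (1 + 2 * (eps / 3))) -> 0 <= g0 ->
  L * ((1 - eps / 3) * OPT - g0) - mu * ((1 - eps / 3) * OPT - (1 - A - eps) * OPT)
    <= - (6 * lk).
Proof.
move=> /andP [e0 e1] /andP [A0 A1] O0 mu0 muO BpE /andP [L0 Lb] g00.
set P := (1 - eps / 3) * OPT.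
have P0 : 0 <= P by apply: mulr_ge0 => //; lra.
have s1 : L * (P - g0) <= L * P by apply: ler_wpM2l => //; lra.
have s2 : L * P <= mu * (A * (1 + 2 * (eps / 3))) * P by apply: ler_wpM2r.
set br := (1 - eps / 3) * (A * (1 + 2 * (eps / 3)) - 1) + (1 - A - eps).
have ebr : mu * (A * (1 + 2 * (eps / 3))) * P - mu * (P - (1 - A - eps) * OPT)
   = (mu * OPT) * br by rewrite /P /br; ring.
have brb : br <= - (eps / 2).
  have : 0 <= A * (eps * eps) by apply: mulr_ge0 => //; apply: mulr_ge0; lra.
  have : 0 <= (1 / 2 - A) * eps by apply: mulr_ge0; lra.
  rewrite /br; nra.
have mO : 0 <= mu * OPT by apply: mulr_ge0.
have s3 : (mu * OPT) * br <= (mu * OPT) * (- (eps / 2)) by apply: ler_wpM2l.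
have s4 : (mu * OPT) * (- (eps / 2)) = - (6 * lk).
  by rewrite muO BpE; field; rewrite gt_eqF.
lra.
Qed.

Lemma drift (R : realType) (V C : finType) (f : C -> {set V} -> R)
  (fnn : forall c, nonneg_fun (f c)) (fmono : forall c, monotone_fun (f c))
  (fsub : forall c, submodular_fun (f c)) (T : {set V}) (Ct : {set C}) (Bt B : nat)
  (sel : {set V} -> V -> R) (OPTv P : R) (Ss : {set V}) :
  (forall S, LP_optimal (fun c A => f c (A :|: T)) Ct Bt S (sel S)) ->
  Ct != finset.set0 -> (0 < #|Ss|)%N -> (#|Ss| <= B)%N -> (Bt <= B)%N ->
  (forall c, OPTv <= f c Ss) -> P * B%:R <= Bt%:R * OPTv ->
  forall c S, c \in Ct ->
  P - f c (S :|: T) <= Bt%:R * \sum_v sel S v * (f c ((v |: S) :|: T) - f c (S :|: T)).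
Proof.
move=> Hopt Ct0 s0 sB BtB OSs PB c S cCt.
have [simpS Hmax] := Hopt S.
set s := #|Ss| in s0 sB.
have spos : (0 : R) < s%:R by rewrite ltr0n.
have Bpos : (0 : R) < B%:R by rewrite ltr0n; exact: leq_trans s0 sB.
pose y := fun v => if v \in Ss then (s%:R)^-1 else (0 : R).
have ys : in_simplex y.
  split.
    by move=> v; rewrite /y; case: ifP => _ //; rewrite invr_ge0; apply: ltW.
  by rewrite /y -big_mkcond /= sumr_const -/s -[_ *+ s]mulr_natl mulfV // gt_eqF.
have L1 := Hmax y ys.
have L2 : P <= LP_obj (fun c A => f c (A :|: T)) Ct Bt S y.
  apply: minover_ge => // c' _ /=.
  set gS := f c' (S :|: T).
  pose m v := marg (fun A => f c' (A :|: T)) v S.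
  have eq1 : \sum_v y v * (Bt%:R * m v + gS) =
      Bt%:R * (\sum_v y v * m v) + gS * \sum_v y v.
    by rewrite mulr_sumr [gS * _]mulr_sumr -big_split; apply: eq_bigr => v _ /=; ring.
  rewrite eq1 (proj2 ys) mulr1.
  set a := \sum_v y v * m v.
  have sa : \sum_(v in Ss) m v = s%:R * a.
    rewrite /a /y mulr_sumr big_mkcond /=; apply: eq_bigr => v _.
    case: ifP => _; last by rewrite !mul0r mulr0.
    by rewrite mulrA mulfV ?gt_eqF // mul1r.
  have hsum := sum_marg (shift_mono T (fmono c')) (shift_sub T (fsub c')) Ss S.
  rewrite -/m sa /= in hsum.
  set G := f c' ((Ss :|: S) :|: T) in hsum.
  have GO : OPTv <= G.
    apply: le_trans (OSs c') _; apply: fmono; rewrite -setUA; exact: subsetUl.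
  have GgS : gS <= G by apply: fmono; apply: setSU; exact: subsetUr.
  have gS0 : 0 <= gS := fnn c' _.
  have a0 : 0 <= a.
    apply: sumr_ge0 => v _; apply: mulr_ge0; last exact: marg_ge0 (shift_mono T (fmono c')) _ _.
    by rewrite /y; case: ifP => _ //; rewrite invr_ge0; apply: ltW.
  have sB' : (s%:R : R) <= B%:R by rewrite ler_nat.
  have BtB' : (Bt%:R : R) <= B%:R by rewrite ler_nat.
  have Bt0 : (0 : R) <= Bt%:R by [].
  rewrite -(ler_pM2r Bpos).
  have f1 : 0 <= (B%:R - s%:R) * (Bt%:R * a) by apply: mulr_ge0; [lra | apply: mulr_ge0].
  have f2 : Bt%:R * (G - gS) <= Bt%:R * (s%:R * a) by apply: ler_wpM2l.
  have f3 : Bt%:R * OPTv <= Bt%:R * G by apply: ler_wpM2l.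
  have f4 : 0 <= (B%:R - Bt%:R) * gS by apply: mulr_ge0; lra.
  lra.
have L3 := @minover_le _ _ _ (fun c0 => \sum_v sel S v *
    (Bt%:R * marg (fun A => f c0 (A :|: T)) v S + f c0 (S :|: T))) _ cCt.
have eq2 : \sum_v sel S v * (Bt%:R * marg (fun A => f c (A :|: T)) v S + f c (S :|: T)) =
   Bt%:R * (\sum_v sel S v * (f c ((v |: S) :|: T) - f c (S :|: T))) + f c (S :|: T) * \sum_v sel S v.
  by rewrite mulr_sumr [f c _ * _]mulr_sumr -big_split; apply: eq_bigr => v _ /=; rewrite /marg; ring.
rewrite eq2 (proj2 simpS) mulr1 in L3.
have := le_trans L2 (le_trans L1 L3).
lra.
Qed.
Unset Implicit Arguments.
Theorem theorem2 (R : realType) (V C : finType) (f : C -> {set V} -> R)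
  (B B' : nat) (eps delta : R) :
  (0 < #|V|)%N ->
  (forall c, nonneg_fun (f c)) ->
  (forall c, monotone_fun (f c)) ->
  (forall c, submodular_fun (f c)) ->
  (2 <= #|C|)%N ->
  0 < eps < 1 ->
  0 < delta < 1 ->
  (108 * #|C|%:R / eps ^+ 3 * ln (#|C|%:R : R) <= B%:R) ->
  (* B' = 1 / gamma with gamma = eps^2 / (36 log k) *)
  B'%:R = 1 / (eps ^+ 2 / (36 * ln (#|C|%:R : R))) ->
  forall T : {set V}, preprocess_output f B' T ->
  let Ct := [set c | f c T < OPT f B] in
  let ft := fun c (A : {set V}) => f c (A :|: T) in
  let Bt := (B - #|T|)%N in
  let good := fun St : {set V} =>
    (minover [set: C] (fun c => f c (T :|: St)) >= (1 - 1 / expR 1 - eps) * OPT f B)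
    && (#|T :|: St| <= B)%N in
  (Ct = finset.set0 -> good finset.set0) /\
  (Ct != finset.set0 -> forall sel : {set V} -> V -> R,
    (forall S, LP_optimal ft Ct Bt S (sel S)) ->
    alg2_prob ft Ct Bt sel delta good >= 1 - delta).
Proof.
move=> HV fnn fmono fsub Hk /andP [e0 e1] Hd HB HB' T Hpre Ct ft Bt good.
set k := #|C| in Hk HB HB'.
have kr : (2 : R) <= k%:R by rewrite ler_nat.
set lk := ln (k%:R : R) in HB HB'.
have lk0 : 0 < lk by apply: ln_gt0; lra.
have B'R : (B'%:R : R) = 36 * lk / eps ^+ 2.
  by rewrite HB'; field; rewrite ?gt_eqF.
have ep2 : 0 < eps ^+ 2 by exact: exprn_gt0.
have ep3 : 0 < eps ^+ 3 by exact: exprn_gt0.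
have B'pos : (0 < B')%N.
  by rewrite -(ltr0n R) B'R; apply: divr_gt0 => //; lra.
have [cardT margT] := preproc fnn fmono fsub Hpre B'pos.
have Tsmall : (#|T|%:R : R) <= eps / 3 * B%:R.
  have h1 : (#|T|%:R : R) <= k%:R * B'%:R by rewrite -natrM ler_nat.
  have h2 : (k%:R : R) * B'%:R = 36 * k%:R * lk / eps ^+ 2.
    by rewrite B'R; field; rewrite gt_eqF.
  have h3 : eps / 3 * (108 * k%:R / eps ^+ 3 * lk) = 36 * k%:R * lk / eps ^+ 2.
    by rewrite [eps ^+ 3]exprS; field; rewrite ?gt_eqF.
  have h4 : eps / 3 * (108 * k%:R / eps ^+ 3 * lk) <= eps / 3 * B%:R.
    by apply: ler_wpM2l => //; lra.
  lra.
have B0 : (0 : R) < B%:R.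
  apply: lt_le_trans HB; apply: mulr_gt0 => //; apply: divr_gt0 => //; lra.
have TB : (#|T| <= B)%N.
  have : eps / 3 * B%:R <= B%:R by rewrite mulrC; apply: mul_le1; lra.
  by rewrite -(ler_nat R); lra.
have O0 := OPT_ge0 f B.
pose A := 1 / expR (1 : R).
have eA : 2 <= expR (1 : R) by have := expR_ge1Dx (1 : R); lra.
have A0 : 0 < A by rewrite /A; apply: divr_gt0 => //; lra.
have A2 : A <= 1 / 2.
  have Ae : A * expR 1 = 1 by rewrite /A div1r mulVf // gt_eqF // expR_gt0.
  have : A * 2 <= A * expR 1 by apply: ler_wpM2l => //; apply: ltW.
  lra.
set thr := (1 - A - eps) * OPT f B.
have thrO : thr <= OPT f B by rewrite /thr mulrC; apply: mul_le1 => //; lra.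
have CT0 : [set: C] != finset.set0.
  by rewrite -cards_eq0 cardsT -lt0n; exact: leq_trans _ Hk.
have notCt : forall c, c \notin Ct -> OPT f B <= f c T by move=> c; rewrite inE -leNgt.
have cardTS : forall S : {set V}, (#|S| <= Bt)%N -> (#|T :|: S| <= B)%N.
  by move=> S hS; apply: card_aux.
split.
  move=> Ct0; rewrite /good; apply/andP; split; last by rewrite setU0.
  apply: minover_ge => // c _; have : c \notin Ct by rewrite Ct0 inE.
  move/notCt; rewrite setU0 -/A -/thr; lra.
move=> Ct0 sel Hsel.
have simp : forall S, in_simplex (sel S) by move=> S; case: (Hsel S).
have /set0Pn [c1 c1Ct] := Ct0.
have fc1 : f c1 T < OPT f B by move: c1Ct; rewrite inE.
have Opos : 0 < OPT f B by have := fnn c1 T; lra.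
have [Oz|[Ss [SsB OSs]]] := OPT_att f B; first by move: Opos; rewrite Oz ltxx.
have OSs' : forall c, OPT f B <= f c Ss.
  by move=> c; rewrite OSs; apply: (minover_le (fun c => f c Ss)); rewrite in_setT.
have Sspos : (0 < #|Ss|)%N.
  rewrite card_gt0; apply/negP => /eqP Ss0.
  have := OSs' c1; rewrite Ss0; have := fmono c1 _ _ (sub0set T); lra.
have BtB : (Bt <= B)%N by rewrite /Bt leq_subr.
have BtR : (Bt%:R : R) = B%:R - #|T|%:R by rewrite /Bt natrB.
have Bt1 : (0 < Bt)%N.
  rewrite -(ltr0n R) BtR.
  have : eps / 3 * B%:R < B%:R by rewrite mulrC -subr_gt0 -{1}(mulr1 B%:R) -mulrBr; apply: mulr_gt0 => //; lra.
  lra.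
set P := (1 - eps / 3) * OPT f B.
have PB : P * B%:R <= Bt%:R * OPT f B.
  rewrite BtR /P.
  have : 0 <= OPT f B * (eps / 3 * B%:R - #|T|%:R) by apply: mulr_ge0; lra.
  lra.
set M := OPT f B / B'%:R.
have B'R0 : (0 : R) < B'%:R by rewrite ltr0n.
have Mpos : 0 < M by apply: divr_gt0.
have M0 : 0 <= M by apply: ltW.
have Hinc : forall c, c \in Ct -> forall S v, 0 <= ft c (v |: S) - ft c S <= M.
  move=> c cCt S v; rewrite /ft -setUA.
  have m0 := marg_ge0 (fmono c) v (S :|: T).
  have mb := margT c (S :|: T) v (subsetUr S T).
  have fcT : f c T < OPT f B by move: cCt; rewrite inE.
  rewrite /marg in m0 mb; rewrite m0 /= /M ler_pdivlMr // mulrC; lra.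
have Hdr : forall c, c \in Ct -> forall S, P - ft c S <= Bt%:R * \sum_v sel S v * (ft c (v |: S) - ft c S).
  by move=> c cCt S; rewrite /ft; exact: (drift fnn fmono fsub Hsel Ct0 Sspos SsB BtB OSs' PB S cCt).
set mu := eps / 3 / M.
have mu0 : 0 <= mu by apply: divr_ge0; lra.
have muM : mu * M = eps / 3 by rewrite /mu; field; rewrite gt_eqF.
have muO : mu * OPT f B = eps / 3 * B'%:R.
  by rewrite /mu /M; field; rewrite ?gt_eqF.
have He : 0 < eps < 1 by rewrite e0 e1.
have HA : 0 <= A <= 1 / 2 by rewrite A2 andbT; apply: ltW.
have HT : trial_exp sel Bt finset.set0
    (fun S => if thr <= minover Ct (fun c => ft c S) then 0 else 1) <= 1 / 2.
  apply: (@union_bound _ _ _ _ _ _ (fun c X => expR (mu * (P - ft c X))) _ _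
     (expR (- (mu * (P - thr)))) (expR (- (6 * lk)))) => //.
  - exact: ltW (expR_gt0 _).
  - by move=> c X; apply: ltW; apply: expR_gt0.
  - move=> c X hX; rewrite -expRD; apply: le_trans (expR_ge1Dx _).
    have : 0 <= mu * (thr - ft c X) by apply: mulr_ge0 => //; lra.
    lra.
  - move=> c cCt.
    have [L [HL tb]] := percolor simp Bt1 M0 (Hinc c cCt) (Hdr c cCt) mu0 muM He.
    apply: le_trans (ler_wpM2l (ltW (expR_gt0 _)) tb) _.
    rewrite -expRD ler_expR.
    have := core He HA O0 mu0 muO B'R HL (fnn c (finset.set0 :|: T)).
    rewrite /P /thr /ft; lra.
  - have hk := @kbound R k Hk.
    have cC : (#|Ct| <= k)%N by rewrite /k -cardsT; apply: subset_leq_card; exact: subsetT.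
    apply: le_trans hk; apply: ler_wpM2r; first exact: ltW (expR_gt0 _).
    by rewrite ler_nat.
have HG : forall S : {set V}, (#|S| <= Bt)%N -> good S = (thr <= minover Ct (fun c => ft c S)).
  move=> S hS; rewrite /good cardTS // andbT -/A -/thr.
  apply/idP/idP => H.
    apply: minover_ge => // c cCt; rewrite /ft setUC; apply: le_trans H _.
    by apply: (minover_le (fun c => f c (T :|: S))); rewrite in_setT.
  apply: minover_ge => // c _; case: (boolP (c \in Ct)) => cCt.
    rewrite setUC; apply: le_trans H _; exact: (minover_le (fun c => ft c S) cCt).
  apply: le_trans thrO _; apply: le_trans (notCt c cCt) _; apply: fmono; exact: subsetUl.
have h00 : (#|finset.set0 : {set V}| <= Bt)%N by rewrite cards0.
have [_ R2] := rep simp HG HT (alg2_reps delta) h00.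
rewrite /alg2_prob; apply: le_trans R2.
by rewrite lerD2l lerN2; exact: reps_le Hd.
Qed.
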